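(* Let $G$ be a finite group, $p$ a prime dividing $|G|$, $P\in\mathrm{Syl}_p(G)$ and $\Omega=\Omega_1(Z(P))$. If $C\le P$ is fully centralized, then $C\Omega\le P$ is fully centralized and $C_P(C\Omega)=C_P(C)$.
   Context: $\Omega_1(H)$ is the subgroup generated by the elements of order $p$ of $H$. A subgroup $Q\le P$ is fully centralized if $C_P(Q)$ is a Sylow $p$-subgroup of $C_G(Q)$ (equivalently, $|C_P(Q^g)|\le|C_P(Q)|$ for all $g\in G$ with $Q^g\le P$). *)

(* Defs.v *)
From mathcomp Require Import all_boot all_fingroup all_solvable.
Set Implicit Arguments.
Unset Strict Implicit.
Unset Printing Implicit Defensive.
Local Open Scope group_scope.

Definition fully_centralized (gT : finGroupType) (p : nat) (G P : {group gT}) (Q : {set gT}) : bool :=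
  'C_P(Q)%G \in 'Syl_p('C_G(Q)).

(* Main.v *)
Require Import Defs.
From mathcomp Require Import all_boot all_fingroup all_solvable.
Local Open Scope group_scope.

Theorem lemma5p11 (gT : finGroupType) (G P C : {group gT}) (p : nat) :
  prime p -> p %| #|G| -> P \in 'Syl_p(G) ->
  C \subset P -> fully_centralized p G P C ->
  [/\ group_set (C * 'Ohm_1('Z(P))), C * 'Ohm_1('Z(P)) \subset P,
      fully_centralized p G P (C * 'Ohm_1('Z(P)))
    & 'C_P(C * 'Ohm_1('Z(P))) = 'C_P(C)].
Proof.
move=> _ _ _ sCP fc.
set O := 'Ohm_1('Z(P)).
have sOZ : O \subset 'Z(P) by apply: Ohm_sub.
have sOP : O \subset P := subset_trans sOZ (center_sub P).
have cPO : P \subset 'C(O).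
  by rewrite centsC; apply: subset_trans sOZ _; apply: subsetIr.
have cCO : C \subset 'C(O) := subset_trans sCP cPO.
have gs : group_set (C * O) by apply/comm_group_setP; apply: centC.
have eq : 'C_P(C * O) = 'C_P(C).
  rewrite (centM C [group of O]) /= setIA -setIA.
  by rewrite setIA; apply/setIidPl; apply: subset_trans (subsetIl _ _) cPO.
split=> //; first by apply: mul_subG.
move: fc; rewrite /fully_centralized !inE /=.
rewrite eq.
move=> hall; apply: (pHall_subl (K := [group of 'C_G(C * O)]) _ _ hall).
- apply/subsetIP; split; first by move: (pHall_sub hall) => /subsetIP [].

  have -> : 'C(C * O) = 'C_('C(C))(O) by apply: (centM C [group of 'Ohm_1('Z(P))]).
  apply/subsetIP; split; first exact: subsetIr.
  by apply: subset_trans (subsetIl _ _) cPO.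
- apply: setIS.
  have -> : 'C(C * O) = 'C_('C(C))(O) by apply: (centM C [group of 'Ohm_1('Z(P))]).
  exact: subsetIl.
Qed.
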